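(* Let $N\ge d$ and let $K\subset\mathbb{R}^d$ be a compact convex polytope of dimension $d$ with $N+1$ faces of codimension $1$, denoted $F_0,\dots,F_N$. Let $H_0,\dots,H_N$ be the hyperplanes with $F_j\subset H_j$, and let $n_0,\dots,n_N$ be corresponding normal vectors. Suppose every collection of $d$ vectors in $\{n_0,\dots,n_N\}$ is linearly independent. Then $K$ is an intersection of finitely many $d$-dimensional simplices, $$K=\bigcap_{j=1}^M S_j,\qquad M\le \binom{N+1}{d+1},$$ such that each (codimension-one) face of each $S_j$ contains a face of $K$.
   Context: A hyperplane $H=\{x\in\mathbb{R}^d\colon l(x)=0\}$ is the zero set of a nonconstant affine function $l(x)=n\cdot x+b$. The vector $n$ is a normal vector of $H$. *)

(* Defs.v *)
From HB Require Import structures.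
From mathcomp Require Import all_boot all_order all_algebra.
From mathcomp Require Import classical_sets reals.
Set Implicit Arguments. Unset Strict Implicit. Unset Printing Implicit Defensive.
Import Order.TTheory GRing.Theory Num.Theory.
Local Open Scope ring_scope.
Local Open Scope classical_set_scope.

Section Defs.
Variables (R : realType) (d : nat).
Notation vec := 'rV[R]_d.

Definition dotp (u v : vec) : R := \sum_(i < d) u 0 i * v 0 i.

Definition aff_indep (m : nat) (p : 'I_m -> vec) : Prop :=
  forall w : 'I_m -> R, \sum_(i < m) w i = 0 ->
    \sum_(i < m) w i *: p i = 0 -> forall i, w i = 0.

Definition conv_hull (m : nat) (p : 'I_m -> vec) : set vec :=
  [set x | exists w : 'I_m -> R, (forall i, 0 <= w i) /\
     \sum_(i < m) w i = 1 /\ x = \sum_(i < m) w i *: p i].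

Definition polytope (K : set vec) : Prop :=
  exists m (p : 'I_m -> vec), K = conv_hull p.

Definition full_dim (K : set vec) : Prop :=
  exists q : 'I_d.+1 -> vec, aff_indep q /\ forall i, K (q i).

Definition facet (K F : set vec) : Prop :=
  exists (n : vec) (b : R), n != 0 /\
    (forall x, K x -> dotp n x + b <= 0) /\
    F = [set x | K x /\ dotp n x + b = 0] /\
    exists p : 'I_d -> vec, aff_indep p /\ forall i, F (p i).

Definition simplex (S : set vec) : Prop :=
  exists v : 'I_d.+1 -> vec, aff_indep v /\ S = conv_hull v.

End Defs.

(* Main.v *)
Require Import Defs.
From HB Require Import structures.
From mathcomp Require Import all_boot all_order all_algebra.
From mathcomp Require Import classical_sets reals.
From mathcomp Require Import boolp ring lra zify.
Set Implicit Arguments. Unset Strict Implicit. Unset Printing Implicit Defensive.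
Import Order.TTheory GRing.Theory Num.Theory.
Local Open Scope ring_scope.

Section Dot.
Variable R : realType.

Lemma dotpC k (u v : 'rV[R]_k) : dotp u v = dotp v u.
Proof. by apply: eq_bigr => i _; rewrite mulrC. Qed.

Lemma dotpDr k (u v w : 'rV[R]_k) : dotp u (v + w) = dotp u v + dotp u w.
Proof. by rewrite /dotp -big_split; apply: eq_bigr => i _; rewrite mxE mulrDr. Qed.

Lemma dotpZr k (u v : 'rV[R]_k) a : dotp u (a *: v) = a * dotp u v.
Proof. by rewrite /dotp mulr_sumr; apply: eq_bigr => i _; rewrite mxE mulrCA. Qed.

Lemma dotpNr k (u v : 'rV[R]_k) : dotp u (- v) = - dotp u v.
Proof. by rewrite -scaleN1r dotpZr mulN1r. Qed.

Lemma dotpBr k (u v w : 'rV[R]_k) : dotp u (v - w) = dotp u v - dotp u w.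
Proof. by rewrite dotpDr dotpNr. Qed.

Lemma dotp0r k (u : 'rV[R]_k) : dotp u 0 = 0.
Proof. by rewrite /dotp big1 // => i _; rewrite mxE mulr0. Qed.

Lemma dotp_sumr k (I : finType) (u : 'rV[R]_k) (F : I -> 'rV[R]_k) :
  dotp u (\sum_i F i) = \sum_i dotp u (F i).
Proof.
rewrite /dotp exchange_big /=; apply: eq_bigr => c _.
by rewrite summxE mulr_sumr.
Qed.

Lemma dotpDl k (u v w : 'rV[R]_k) : dotp (v + w) u = dotp v u + dotp w u.
Proof. by rewrite !(dotpC _ u) dotpDr. Qed.
Lemma dotpZl k (u v : 'rV[R]_k) a : dotp (a *: v) u = a * dotp v u.
Proof. by rewrite !(dotpC _ u) dotpZr. Qed.
Lemma dotpNl k (u v : 'rV[R]_k) : dotp (- v) u = - dotp v u.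
Proof. by rewrite !(dotpC _ u) dotpNr. Qed.
Lemma dotpBl k (u v w : 'rV[R]_k) : dotp (v - w) u = dotp v u - dotp w u.
Proof. by rewrite !(dotpC _ u) dotpBr. Qed.
Lemma dotp0l k (u : 'rV[R]_k) : dotp 0 u = 0.
Proof. by rewrite dotpC dotp0r. Qed.
Lemma dotp_suml k (I : finType) (u : 'rV[R]_k) (F : I -> 'rV[R]_k) :
  dotp (\sum_i F i) u = \sum_i dotp (F i) u.
Proof. by rewrite dotpC dotp_sumr; apply: eq_bigr => i _; rewrite dotpC. Qed.

Lemma dotpp_ge0 k (u : 'rV[R]_k) : 0 <= dotp u u.
Proof. by apply: sumr_ge0 => i _; rewrite -expr2 sqr_ge0. Qed.

Lemma dotpp_eq0 k (u : 'rV[R]_k) : (dotp u u == 0) = (u == 0).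
Proof.
apply/idP/idP; last by move/eqP->; rewrite dotp0r.
move=> /eqP H; apply/eqP/rowP => i; rewrite mxE.
have := H; rewrite /dotp => /eqP; rewrite psumr_eq0; last by move=> j _; rewrite -expr2 sqr_ge0.
by move=> /allP /(_ i (mem_index_enum _)) /implyP /(_ isT); rewrite mulf_eq0 orbb => /eqP.
Qed.

Lemma dotpp_gt0 k (u : 'rV[R]_k) : u != 0 -> 0 < dotp u u.
Proof. by move=> H; rewrite lt_def dotpp_eq0 H dotpp_ge0. Qed.

End Dot.


Section Farkas.
Variable R : realType.

Definition ext0 m (c : R) (mu : 'I_m -> R) (i : 'I_m.+1) : R :=
  if unlift ord0 i is Some i' then mu i' else c.

Lemma ext0_0 m c (mu : 'I_m -> R) : ext0 c mu ord0 = c.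
Proof. by rewrite /ext0 unlift_none. Qed.
Lemma ext0_lift m c (mu : 'I_m -> R) i : ext0 c mu (lift ord0 i) = mu i.
Proof. by rewrite /ext0 liftK. Qed.

Lemma farkas k m (a : 'I_m -> 'rV[R]_k) (b : 'rV[R]_k) :
  ~ (exists mu : 'I_m -> R, (forall i, 0 <= mu i) /\ b = \sum_i mu i *: a i) ->
  exists y, (forall i, dotp y (a i) <= 0) /\ 0 < dotp y b.
Proof.
elim: m a b => [|m IH] a b Hn.
  exists b; split; first by case.
  apply: dotpp_gt0; apply/eqP => b0; apply: Hn; exists (fun _ => 0); split => // .
  by rewrite big_ord0.
pose q := a ord0; pose A i := a (lift ord0 i).
have [y [Hy1 Hy2]] : exists y, (forall i, dotp y (A i) <= 0) /\ 0 < dotp y b.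
  apply: IH => -[mu [mu0 Hb]]; apply: Hn; exists (ext0 0 mu); split.
    by move=> i; rewrite /ext0; case: (unlift _ _).
  by rewrite big_ord_recl ext0_0 scale0r add0r Hb; apply: eq_bigr => i _; rewrite ext0_lift.
have [Hq|Hq] := lerP (dotp y q) 0.
  exists y; split => // i; case: (unliftP ord0 i) => [j|] ->; [exact: Hy1| exact: Hq].
set t := dotp y q in Hq.
have tn0 : t != 0 by rewrite gt_eqF.
pose A' i := A i - (dotp y (A i) / t) *: q.
pose b' := b - (dotp y b / t) *: q.
have [y' [Hy'1 Hy'2]] : exists y', (forall i, dotp y' (A' i) <= 0) /\ 0 < dotp y' b'.
  apply: IH => -[mu [mu0 Hb]]; apply: Hn.
  pose c := dotp y b / t - \sum_i mu i * (dotp y (A i) / t).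
  exists (ext0 c mu); split.
    move=> i; rewrite /ext0; case: (unlift _ _) => // .
    rewrite /c subr_ge0; apply: le_trans (_ : 0 <= _).
      apply: sumr_le0 => i0 _; apply: mulr_ge0_le0 => //.
      by apply: mulr_le0_ge0 => //; rewrite invr_ge0 ltW.
    by apply: divr_ge0; apply: ltW.
  rewrite big_ord_recl ext0_0.
  have -> : b = b' + (dotp y b / t) *: q by rewrite /b' subrK.
  rewrite Hb /A' /c.
  under eq_bigr do rewrite scalerBr scalerA.
  under [X in _ = _ + X]eq_bigr do rewrite ext0_lift.
  rewrite sumrB -scaler_suml scalerBl.
  rewrite /A; set S1 := \sum_(i < m) _; set S2 := \sum_(i < m) _ .
  by rewrite /q [RHS]addrC addrA addrAC.
exists (y' - (dotp y' q / t) *: y); split.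
  move=> i; case: (unliftP ord0 i) => [j|] ->.
    have := Hy'1 j; rewrite /A' dotpBr dotpZr dotpBl dotpZl.
    rewrite -/(A j) => H; apply: (le_trans _ H); rewrite le_eqVlt; apply/orP; left; apply/eqP; ring.
  by rewrite dotpBl dotpZl -/q -/t -mulrA mulVf // mulr1 subrr.
have := Hy'2; rewrite /b' dotpBr dotpZr dotpBl dotpZl -/t.
move=> H; apply: (lt_le_trans H); rewrite le_eqVlt; apply/orP; left; apply/eqP; ring.
Qed.

End Farkas.


Section Cara.
Variable R : realType.

Lemma fin_argmin (T : finType) (P : pred T) (f : T -> R) i0 :
  P i0 -> exists2 i, P i & forall j, P j -> f i <= f j.
Proof. move=> Pi0; case: (@arg_minP _ _ _ i0 P f Pi0) => i Pi H; by exists i. Qed.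

Definition li k (T : finType) (v : T -> 'rV[R]_k) (U : {set T}) : Prop :=
  forall w : T -> R, (forall i, i \notin U -> w i = 0) ->
    \sum_i w i *: v i = 0 -> forall i, w i = 0.

Lemma caratheodory k (T : finType) (v : T -> 'rV[R]_k) b (mu : T -> R) :
  (forall i, 0 <= mu i) -> b = \sum_i mu i *: v i ->
  exists lam : T -> R, (forall i, 0 <= lam i) /\ b = \sum_i lam i *: v i /\
    li v [set i | lam i != 0].
Proof.
move: {2}#|[set i | mu i != 0]| (leqnn #|[set i | mu i != 0]|) => n.
elim: n mu => [|n IH] mu Hn mu0 Hb.
  exists mu; split => //; split => // w Hw _ i; apply: Hw.
  by move: Hn; rewrite leqn0 => /eqP/cards0_eq ->; rewrite inE.
have [HL|HL] := pselect (li v [set i | mu i != 0]).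
  by exists mu.
have [w [H1 [H2 [i0 Hi0]]]] : exists w : T -> R, (forall i, i \notin [set i | mu i != 0] -> w i = 0) /\
    \sum_i w i *: v i = 0 /\ exists i, 0 < w i.
  apply: contrapT => Hne; apply: HL => w H1 H2 i; apply: contrapT => /eqP Hi.
  have [Hlt|Hgt|] := ltrgtP (w i) 0; last by move=> Heq; rewrite Heq eqxx in Hi.
    apply: Hne; exists (fun j => - w j); split.
      by move=> j /H1 ->; rewrite oppr0.
    split; last by exists i; rewrite oppr_gt0.
    under eq_bigr do rewrite scaleNr.
    by rewrite sumrN H2 oppr0.
  by apply: Hne; exists w; split => //; split => //; exists i.
have [ib Pis Hmin] := @fin_argmin T (fun i => 0 < w i) (fun i => mu i / w i) i0 Hi0.
rewrite /= in Pis Hmin.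
set t := mu ib / w ib.
have t0 : 0 <= t by apply: divr_ge0 => //; apply: ltW.
pose mu' i := mu i - t * w i.
have Hsupp : forall i, mu i = 0 -> w i = 0.
  by move=> i Hi; apply: H1; rewrite inE Hi eqxx.
apply: (IH mu').
- rewrite -ltnS; apply: leq_trans Hn; apply: proper_card; apply/properP; split.
    apply/fintype.subsetP => i; rewrite !inE /mu'; apply: contra => /eqP Hi.
    by rewrite Hi (Hsupp _ Hi) mulr0 subr0.
  exists ib; rewrite !inE.
    by apply/eqP => Hi; move: Pis; rewrite (Hsupp _ Hi) ltxx.
  rewrite negbK /mu' /t divfK ?subrr // gt_eqF //.
- move=> i; rewrite /mu' subr_ge0.
  have [Hw|Hw] := ltrP 0 (w i).
    by rewrite -ler_pdivlMr //; apply: Hmin.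
  by apply: le_trans (mu0 i); apply: mulr_ge0_le0.
- rewrite Hb /mu'.
  under [RHS]eq_bigr do rewrite scalerBl -scalerA.
  by rewrite sumrB -scaler_sumr H2 scaler0 subr0.
Qed.

End Cara.


Section Mx.
Variable R : realType.

Lemma dotp_row_mx k1 k2 (u1 v1 : 'rV[R]_k1) (u2 v2 : 'rV[R]_k2) :
  dotp (row_mx u1 u2) (row_mx v1 v2) = dotp u1 v1 + dotp u2 v2.
Proof.
rewrite /dotp big_split_ord /=; congr (_ + _); apply: eq_bigr => i _;
by rewrite ?row_mxEl ?row_mxEr.
Qed.

Lemma dotp_const (a c : R) : dotp (const_mx a : 'rV[R]_1) (const_mx c) = a * c.
Proof. by rewrite /dotp big_ord1 !mxE. Qed.

Definition Xr d (y : 'rV[R]_d) : 'rV[R]_(d + 1) := row_mx y (const_mx 1).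
Definition Yr d (a : 'rV[R]_d) (b : R) : 'rV[R]_(d + 1) := row_mx a (const_mx b).

Lemma dotpYX d a b (y : 'rV[R]_d) : dotp (Yr a b) (Xr y) = dotp a y + b.
Proof. by rewrite dotp_row_mx dotp_const mulr1. Qed.

Lemma Yr_split d (z : 'rV[R]_(d + 1)) : z = Yr (lsubmx z) (rsubmx z 0 0).
Proof.
rewrite /Yr -[z in LHS]hsubmxK; congr row_mx.
by apply/rowP => i; rewrite !mxE !ord1.
Qed.

Lemma Yr_eq0 d a b : (Yr a b == 0 :> 'rV[R]_(d + 1)) = (a == 0) && (b == 0).
Proof.
rewrite /Yr row_mx_eq0; congr (_ && _); apply/eqP/eqP => [/rowP/(_ ord0)|->].
  by rewrite !mxE.
by apply/rowP => i; rewrite !mxE.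
Qed.

Lemma mulmx_trE m n k (A : 'M[R]_(m, k)) (B : 'M[R]_(n, k)) i j :
  (A *m B^T) i j = dotp (row i A) (row j B).
Proof. by rewrite mxE; apply: eq_bigr => c _; rewrite !mxE. Qed.

Lemma kermx_row m n (A : 'M[R]_(m, n)) :
  (forall u : 'rV[R]_m, u *m A = 0 -> u = 0) -> row_free A.
Proof.
move=> H; rewrite -kermx_eq0; apply/eqP/row_matrixP => i; rewrite row0.
by apply: H; rewrite -row_mul mulmx_ker row0.
Qed.

Lemma row_free_ker m n (A : 'M[R]_(m, n)) (u : 'rV[R]_m) : row_free A -> u *m A = 0 -> u = 0.
Proof.
rewrite -kermx_eq0 => /eqP K0 /sub_kermxP; rewrite K0.
by move/submx0null.
Qed.

Lemma not_row_free m n (A : 'M[R]_(m, n)) : ~~ row_free A ->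
  exists u : 'rV[R]_m, u != 0 /\ u *m A = 0.
Proof.
move=> H; apply: contrapT => Hn; move: H; apply/negP/negPn; apply: kermx_row => u Hu.
by apply: contrapT => /eqP Hu0; apply: Hn; exists u.
Qed.

Lemma sum_Xr d m (w : 'I_m -> R) (g : 'I_m -> 'rV[R]_d) a b :
  dotp (Yr a b) (\sum_l w l *: Xr (g l)) = dotp a (\sum_l w l *: g l) + b * \sum_l w l.
Proof.
rewrite dotp_sumr dotp_sumr mulr_sumr -big_split; apply: eq_bigr => l _.
by rewrite !dotpZr dotpYX /= mulrDr [b * _]mulrC.
Qed.

Definition Gm d m (g : 'I_m -> 'rV[R]_d) : 'M[R]_(m, d + 1) := \matrix_l Xr (g l).

Lemma aff_indep_free d m (g : 'I_m -> 'rV[R]_d) : aff_indep g -> row_free (Gm g).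
Proof.
move=> Ha; apply: kermx_row => u; rewrite mulmx_sum_row.
under eq_bigr do rewrite rowK.
move=> H.
have H1 : \sum_l u 0 l = 0.
  have := sum_Xr (fun l => u 0 l) g 0 1; rewrite H dotp0r dotp0l add0r mul1r.
  by move<-.
have H2 : \sum_l u 0 l *: g l = 0.
  apply/eqP; rewrite -dotpp_eq0; apply/eqP.
  have := sum_Xr (fun l => u 0 l) g (\sum_l u 0 l *: g l) 0; rewrite H dotp0r mul0r addr0.
  by move<-.
by apply/rowP => i; rewrite mxE (Ha _ H1 H2 i).
Qed.

Lemma mx2E m (A : 'M[R]_(2, m)) (u : 'rV[R]_2) :
  u *m A = u 0 0 *: row 0 A + u 0 1 *: row 1 A.
Proof.
rewrite mulmx_sum_row big_ord_recl big_ord1 /=.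
by rewrite (_ : lift ord0 ord0 = 1 :> 'I_2) //; apply: val_inj.
Qed.

Lemma addZE m n (A B : 'M[R]_(m, n)) x y i j :
  (x *: A + y *: B) i j = x * A i j + y * B i j.
Proof. by rewrite !mxE. Qed.

Lemma constE m n (a : R) i j : (const_mx a : 'M[R]_(m, n)) i j = a.
Proof. by rewrite mxE. Qed.
Lemma zeroE m n i j : (0 : 'M[R]_(m, n)) i j = 0.
Proof. by rewrite mxE. Qed.

Lemma two_hyp d (g : 'I_d -> 'rV[R]_d) a1 b1 a2 b2 :
  aff_indep g ->
  (forall l, dotp a1 (g l) + b1 = 0) -> (forall l, dotp a2 (g l) + b2 = 0) ->
  exists al1 al2 : R, ((al1 != 0) || (al2 != 0)) /\
    al1 *: a1 + al2 *: a2 = 0 /\ al1 * b1 + al2 * b2 = 0.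
Proof.
move=> /aff_indep_free Hf H1 H2.
pose U : 'M[R]_(2, d + 1) := \matrix_(c < 2) (if c == 0 then Yr a1 b1 else Yr a2 b2).
have HGU : Gm g *m U^T = 0.
  apply/matrixP => l c; rewrite mulmx_trE !rowK mxE.
  case: ifP => _; rewrite dotpC dotpYX ?H1 ?H2 //.
have := mulmx0_rank_max HGU; rewrite mxrank_tr (eqP Hf) => Hr.
have : ~~ row_free U.
  rewrite /row_free; apply/negP => /eqP Hu; rewrite Hu in Hr.
  by rewrite leq_add2l in Hr.
move=> /not_row_free [u [u0 Hu]].
exists (u 0 0), (u 0 1).
move: Hu; rewrite mx2E !rowK /= /Yr => Hu.
split.
  apply: contraNT u0; rewrite negb_or !negbK => /andP[/eqP e0 /eqP e1].
  apply/eqP/rowP => i; rewrite mxE; case: i => [[|[|i]] Hi] //.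
  - by rewrite (_ : Ordinal Hi = 0) ?e0 // ; apply: val_inj.
  - by rewrite (_ : Ordinal Hi = 1) ?e1 // ; apply: val_inj.
split.
  apply/rowP => i; have := congr1 (fun M : 'rV[R]_(d + 1) => M 0 (lshift 1 i)) Hu.
  rewrite addZE !row_mxEl => H; by rewrite addZE H !mxE.
have := congr1 (fun M : 'rV[R]_(d + 1) => M 0 (rshift d 0)) Hu.
rewrite addZE !row_mxEr !constE; exact: id.
Qed.

Lemma nataux (d r : nat) : (d.+1 + r <= d + 1)%N -> r = 0%N.
Proof. by rewrite addn1 addSn ltnS -{2}(addn0 d) leq_add2l leqn0 => /eqP. Qed.

Lemma flat d (q : 'I_d.+1 -> 'rV[R]_d) u b :
  aff_indep q -> (forall i, dotp u (q i) + b = 0) -> u = 0.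
Proof.
move=> /aff_indep_free Hf H.
have HGz : Gm q *m (Yr u b)^T = 0.
  apply/matrixP => l c; rewrite mulmx_trE rowK zeroE.
  have -> : row c (Yr u b) = Yr u b by apply/rowP => i; rewrite mxE (ord1 c).
  by rewrite dotpC dotpYX H.
have := mulmx0_rank_max HGz; rewrite mxrank_tr (eqP Hf) => /nataux /eqP.
by rewrite mxrank_eq0 Yr_eq0 => /andP[/eqP].
Qed.

Lemma exists_orth k n (E : 'M[R]_(k, n)) : (k < n)%N ->
  exists z : 'rV[R]_n, z != 0 /\ forall l, dotp (row l E) z = 0.
Proof.
move=> Hkn.
have : ~~ row_free (E^T).
  rewrite /row_free mxrank_tr; apply/negP => /eqP He.
  by have := rank_leq_row E; rewrite He leqNgt Hkn.
move=> /not_row_free [z [z0 Hz]]; exists z; split => // l.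
have := congr1 (fun M : 'rV[R]_k => M 0 l) Hz; rewrite zeroE mxE => <-.
by apply: eq_bigr => i _; rewrite !mxE mulrC.
Qed.

Lemma enum_set (T : finType) (U : {set T}) c : #|U| = c ->
  exists s : 'I_c -> T, injective s /\ forall i, i \in U <-> exists l, s l = i.
Proof.
move=> e; pose s l := @enum_val T (mem U) (cast_ord (esym e) l).
exists s; split.
  by move=> l1 l2 /enum_val_inj /cast_ord_inj.
move=> i; split => [Hi|[l <-]]; last exact: enum_valP.
exists (cast_ord e (enum_rank_in Hi i)).
by rewrite /s cast_ordK enum_rankK_in.
Qed.

Lemma pullback k (T : finType) c (s : 'I_c -> T) (ρ : 'I_c -> R) (F : T -> 'rV[R]_k) :
  injective s ->
  let w := fun i => \sum_(l | s l == i) ρ l in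
  (forall l, w (s l) = ρ l) /\ (forall i, (forall l, s l != i) -> w i = 0) /\
  \sum_i w i *: F i = \sum_l ρ l *: F (s l).
Proof.
move=> sinj w; split.
  move=> l; rewrite /w (big_pred1 l) // => l'; rewrite /= inj_eq //.
split.
  by move=> i Hi; rewrite /w big_pred0 // => l; apply/negbTE.
rewrite /w; under eq_bigr do rewrite scaler_suml.
rewrite (exchange_big_dep xpredT) //=; apply: eq_bigr => l _.
by rewrite (big_pred1 (s l)) // => i; rewrite /= eq_sym.
Qed.

Lemma reindex_supp k (T : finType) c (s : 'I_c -> T) (U : {set T}) (w : T -> R)
   (F : T -> 'rV[R]_k) :
  injective s -> (forall i, i \in U <-> exists l, s l = i) ->
  (forall i, i \notin U -> w i = 0) ->
  \sum_i w i *: F i = \sum_l w (s l) *: F (s l).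
Proof.
move=> sinj HU Hw.
have [P1 [P2 P3]] := pullback (fun l => w (s l)) F sinj.
rewrite -P3; apply: eq_bigr => i _; congr (_ *: _).
have [Hi|Hi] := boolP (i \in U).
  by have [l <-] := (HU i).1 Hi; rewrite P1.
rewrite Hw // P2 // => l; apply/eqP => Hl; move: Hi; rewrite -Hl.
by move/negP; apply; apply/(HU _).2; exists l.
Qed.

Lemma li_card k (T : finType) (v : T -> 'rV[R]_k) (U : {set T}) :
  li v U -> (#|U| <= k)%N.
Proof.
move=> Hli; have [s [sinj Hs]] := enum_set (erefl #|U|).
pose A := \matrix_l v (s l).
suff : row_free A by rewrite /row_free => /eqP <-; apply: rank_leq_col.
apply: kermx_row => u; rewrite mulmx_sum_row; under eq_bigr do rewrite rowK.
move=> H.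
have [P1 [P2 P3]] := pullback (fun l => u 0 l) v sinj.
have Hw := Hli _ _ (etrans P3 H).
apply/rowP => l; rewrite zeroE -P1; apply: Hw.
move=> i Hi; apply: P2 => l'; apply/eqP => Hl; move: Hi; rewrite -Hl.
by move/negP; apply; apply/(Hs _).2; exists l'.
Qed.

End Mx.


Local Open Scope classical_set_scope.

Section Gen.
Variable R : realType.

Lemma sum_row_mx k1 k2 (I : finType) (F1 : I -> 'rV[R]_k1) (F2 : I -> 'rV[R]_k2) :
  \sum_i row_mx (F1 i) (F2 i) = row_mx (\sum_i F1 i) (\sum_i F2 i).
Proof.
apply: (big_rec3 (fun a b c => a = row_mx b c)) => [|i A B C _ ->].
  by rewrite row_mx0.
by rewrite add_row_mx.
Qed.

Lemma sum_const (I : finType) (f : I -> R) :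
  \sum_i (const_mx (f i) : 'rV[R]_1) = const_mx (\sum_i f i).
Proof. by apply/rowP => i; rewrite summxE !mxE; apply: eq_bigr => j _; rewrite mxE. Qed.

Lemma Xr_sum d m (w : 'I_m -> R) (p : 'I_m -> 'rV[R]_d) :
  \sum_i w i *: Xr (p i) = Yr (\sum_i w i *: p i) (\sum_i w i).
Proof.
under eq_bigr do rewrite /Xr scale_row_mx.
rewrite sum_row_mx /Yr; congr row_mx; rewrite -sum_const; apply: eq_bigr => i _.
by apply/rowP => c; rewrite !mxE mulr1.
Qed.

Lemma conv_aff d m (p : 'I_m -> 'rV[R]_d) (w : 'I_m -> R) a bt :
  \sum_i w i = 1 ->
  dotp a (\sum_i w i *: p i) + bt = \sum_i w i * (dotp a (p i) + bt).
Proof.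
move=> H1; rewrite dotp_sumr -[bt in LHS]mul1r -H1 mulr_suml -big_split.
by apply: eq_bigr => i _; rewrite dotpZr /= mulrDr.
Qed.

Lemma conv_le d m (p : 'I_m -> 'rV[R]_d) a bt z :
  conv_hull p z -> (forall i, dotp a (p i) + bt <= 0) -> dotp a z + bt <= 0.
Proof.
move=> [w [w0 [w1 ->]]] H; rewrite conv_aff //.
by apply: sumr_le0 => i _; apply: mulr_ge0_le0.
Qed.

Lemma conv_pt d m (p : 'I_m -> 'rV[R]_d) i : conv_hull p (p i).
Proof.
exists (fun j => if j == i then 1 else 0); split.
  by move=> j; case: ifP.
split.
  rewrite (bigD1 i) //= eqxx big1 ?addr0 //; by move=> j /negbTE ->.
rewrite (bigD1 i) //= eqxx scale1r big1 ?addr0 //; by move=> j /negbTE ->; rewrite scale0r.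
Qed.

Lemma prop_hyp d (g : 'I_d -> 'rV[R]_d) a1 b1 a2 b2 :
  aff_indep g -> a1 != 0 -> a2 != 0 ->
  (forall l, dotp a1 (g l) + b1 = 0) -> (forall l, dotp a2 (g l) + b2 = 0) ->
  exists c, c != 0 /\ a2 = c *: a1 /\ b2 = c * b1.
Proof.
move=> Hg na1 na2 H1 H2.
have [al1 [al2 [Hne [Ha Hb]]]] := two_hyp Hg H1 H2.
have al20 : al2 != 0.
  apply/eqP => al2e; move: Hne Ha; rewrite al2e eqxx orbF scale0r addr0 => Hal /eqP.
  by rewrite scaler_eq0 (negbTE Hal) /= (negbTE na1).
exists (- al1 / al2).
have Ha2 : a2 = (- al1 / al2) *: a1.
  apply: (scalerI al20); rewrite scalerA mulrCA mulfV // mulr1 scaleNr.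
  by apply/eqP; rewrite -addr_eq0 addrC Ha.
split.
  by apply/eqP => c0; move: na2; rewrite Ha2 c0 scale0r eqxx.
split => //.
apply: (mulfI al20); rewrite [RHS]mulrA mulrCA mulfV // mulr1 mulNr.
by apply/eqP; rewrite -addr_eq0 addrC Hb.
Qed.

End Gen.


Section Tight.
Variable R : realType.

Lemma aff_comb d m (q : 'I_m -> 'rV[R]_d) (w : 'I_m -> R) u g :
  dotp u (\sum_i w i *: q i) + g * \sum_i w i = \sum_i w i * (dotp u (q i) + g).
Proof.
rewrite dotp_sumr mulr_sumr -big_split.
by apply: eq_bigr => i _; rewrite dotpZr /=; ring.
Qed.

Lemma tighten d m (p : 'I_m -> 'rV[R]_d) x a bt :
  (forall u g, (forall i, dotp u (p i) + g = 0) -> u = 0) ->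
  (forall i, dotp a (p i) + bt <= 0) -> 0 < dotp a x + bt ->
  exists a' bt' (s : 'I_d -> 'I_m), (forall i, dotp a' (p i) + bt' <= 0) /\
    0 < dotp a' x + bt' /\ aff_indep (fun l => p (s l)) /\
    forall l, dotp a' (p (s l)) + bt' = 0.
Proof.
move=> NH Hv Hx.
suff: forall r, (r <= d)%N -> exists a' bt' (s : 'I_r -> 'I_m),
   (forall i, dotp a' (p i) + bt' <= 0) /\
    0 < dotp a' x + bt' /\ aff_indep (fun l => p (s l)) /\
    forall l, dotp a' (p (s l)) + bt' = 0.
  by move/(_ d (leqnn d)).
elim => [|r IH] Hr.
  have s0 : 'I_0 -> 'I_m by move=> [k Hk]; exfalso; rewrite ltn0 in Hk.
  exists a, bt, s0; split => //; split => //; split; last by case.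
  by move=> w _ _; case.
have [a1 [bt1 [s [Hv1 [Hx1 [Hind Ht]]]]]] := IH (ltnW Hr).
pose E : 'M[R]_(r.+1, d + 1) :=
  \matrix_(k < r.+1) (if unlift ord0 k is Some l then Xr (p (s l)) else Xr x).
have Hrd : (r.+1 < d + 1)%N by rewrite addn1 ltnS.
have [z [z0 Hz]] := exists_orth E Hrd.
move: z0 Hz; rewrite [z]Yr_split; set u := lsubmx z; set g := rsubmx z 0 0.
move=> z0 Hz.
have Hzx : dotp u x + g = 0.
  by have := Hz ord0; rewrite rowK unlift_none dotpC dotpYX.
have Hzs : forall l, dotp u (p (s l)) + g = 0.
  by move=> l; have := Hz (lift ord0 l); rewrite rowK liftK dotpC dotpYX.
have [i1 Hi1] : exists i, dotp u (p i) + g != 0.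
  apply: contrapT => Hn.
  have u0 : u = 0.
    apply: (NH u g) => i; apply/eqP; apply: contrapT => Hi; apply: Hn; exists i; exact/negP.
  move: Hzx; rewrite u0 dotp0l add0r => g0.
  by move: z0; rewrite u0 g0 Yr_eq0 !eqxx.
have [u' [g' [Hzx' [Hzs' [i0 Hi0]]]]] : exists u' g', dotp u' x + g' = 0 /\
   (forall l, dotp u' (p (s l)) + g' = 0) /\ exists i, 0 < dotp u' (p i) + g'.
  have [Hlt|Hgt|Heq] := ltrgtP (dotp u (p i1) + g) 0; last by rewrite Heq eqxx in Hi1.
    exists (- u), (- g); split; first by rewrite dotpNl -opprD Hzx oppr0.
    split; first by move=> l; rewrite dotpNl -opprD Hzs oppr0.
    by exists i1; rewrite dotpNl -opprD oppr_gt0.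
  by exists u, g; split => //; split => //; exists i1.
pose sl i := dotp u' (p i) + g'.
have [ib Pib Hmin] := @fin_argmin R _ (fun i => 0 < sl i)
   (fun i => - (dotp a1 (p i) + bt1) / sl i) i0 Hi0.
rewrite /= in Pib Hmin.
set t := - (dotp a1 (p ib) + bt1) / sl ib.
have t0 : 0 <= t by apply: divr_ge0; [rewrite oppr_ge0; apply: Hv1 | apply: ltW].
have lin : forall y, dotp (a1 + t *: u') y + (bt1 + t * g') =
    (dotp a1 y + bt1) + t * (dotp u' y + g').
  by move=> y; rewrite dotpDl dotpZl; ring.
exists (a1 + t *: u'), (bt1 + t * g'),
  (fun k => if unlift ord0 k is Some l then s l else ib).
split.
  move=> i; rewrite lin.
  have [Hs|Hs] := ltrP 0 (sl i).
    rewrite -(opprK (dotp a1 (p i) + bt1)) addrC subr_le0.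
    by rewrite -ler_pdivlMr //; apply: Hmin.
  by apply: (le_trans (lerD (Hv1 i) (mulr_ge0_le0 t0 Hs))); rewrite addr0.
split; first by rewrite lin Hzx' mulr0 addr0.
split.
  move=> w Hw1 Hw2.
  have H0 : w ord0 = 0.
    have := aff_comb (fun k => p (if unlift ord0 k is Some l then s l else ib)) w u' g'.
    rewrite Hw1 Hw2 dotp0r mulr0 addr0 big_ord_recl /= unlift_none.
    rewrite big1 ?addr0; last by move=> l _; rewrite liftK Hzs' mulr0.
    by move/esym/eqP; rewrite mulf_eq0 (gt_eqF Pib) orbF => /eqP.
  have Hl : forall l, w (lift ord0 l) = 0.
    apply: (Hind (fun l => w (lift ord0 l))).
      by move: Hw1; rewrite big_ord_recl H0 add0r.
    by move: Hw2; rewrite big_ord_recl H0 scale0r add0r; under eq_bigr do rewrite liftK.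
  move=> k; case: (unliftP ord0 k) => [l|] ->; [exact: Hl | exact: H0].
move=> k; case: (unliftP ord0 k) => [l|] _; rewrite lin.
  by rewrite Ht Hzs' mulr0 addr0.
rewrite -/(sl ib) /t divfK ?gt_eqF //.
by rewrite addrN.
Qed.

End Tight.


Section Main.
Variables (R : realType) (d N : nat) (K : set 'rV[R]_d)
  (F : 'I_N.+1 -> set 'rV[R]_d) (n : 'I_N.+1 -> 'rV[R]_d) (b : 'I_N.+1 -> R).
Hypothesis dN : (d <= N)%N.
Hypothesis polyK : polytope K.
Hypothesis fdK : full_dim K.
Hypothesis facF : forall j, facet K (F j).
Hypothesis allF : forall G, facet K G -> exists j, G = F j.
Hypothesis n0 : forall j, n j != 0.
Hypothesis Fsub : forall j, F j `<=` [set x | dotp (n j) x + b j = 0].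
Hypothesis gp : forall s : 'I_d -> 'I_N.+1, injective s ->
     row_free (\matrix_(k < d, i < d) n (s k) 0 i).

Definition ori j : R :=
  if pselect (forall z, K z -> dotp (n j) z + b j <= 0) then 1 else -1.

Lemma ori_neq0 j : ori j != 0.
Proof. by rewrite /ori; case: pselect => ?; rewrite ?oppr_eq0 oner_eq0. Qed.

Lemma ori_sq j : ori j * ori j = 1.
Proof. by rewrite /ori; case: pselect => ?; rewrite ?mulrNN mulr1. Qed.

Lemma ori_cases j : (ori j = 1 /\ (forall z, K z -> dotp (n j) z + b j <= 0)) \/
  (ori j = -1 /\ ~ (forall z, K z -> dotp (n j) z + b j <= 0)).
Proof. by rewrite /ori; case: pselect => H; [left|right]. Qed.

Lemma ori_ok j z : K z -> ori j * (dotp (n j) z + b j) <= 0.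
Proof.
case: (ori_cases j) => -[-> H] Kz; first by rewrite mul1r H.
have [a [bt [a0 [Ha [HF [g [gi Hg]]]]]]] := facF j.
have Hg1 l : dotp a (g l) + bt = 0 by have := Hg l; rewrite HF => -[].
have Hg2 l : dotp (n j) (g l) + b j = 0 by apply: Fsub (Hg l).
have [c [c0 [Hn Hb]]] := prop_hyp gi a0 (n0 j) Hg1 Hg2.
have Hc : c < 0.
  rewrite lt_neqAle c0 /=; apply: contrapT => Hc; apply: H => y Ky.
  rewrite Hn Hb dotpZl -mulrDr; apply: mulr_ge0_le0 (Ha _ Ky).
  by apply: ltW; rewrite ltNge; apply/negP.
rewrite Hn Hb dotpZl -mulrDr mulN1r oppr_le0.
by apply: mulr_le0 (Ha _ Kz); apply: ltW.
Qed.

Lemma FK j x : F j x -> K x.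
Proof. by have [a [bt [_ [_ [HF _]]]]] := facF j; rewrite HF => -[]. Qed.

Lemma dpos : (0 < d)%N.
Proof.
case: (posnP d) => // d0; exfalso; move/negP: (n0 ord0); apply; apply/eqP.
by apply/rowP => i; exfalso; case: i => k; rewrite d0.
Qed.

Lemma NHlem m (p : 'I_m -> 'rV[R]_d) : K = conv_hull p ->
  forall u g, (forall i, dotp u (p i) + g = 0) -> u = 0.
Proof.
move=> Kp u g H; case: fdK => q [qi Kq]; apply: (@flat R d q u g qi) => i.
have := Kq i; rewrite Kp => -[w [w0 [w1 ->]]].
by rewrite conv_aff // big1 // => l _; rewrite H mulr0.
Qed.

Lemma sepK x : ~ K x -> exists j, 0 < ori j * (dotp (n j) x + b j).
Proof.
move=> Kx; case: polyK => m [p Kp].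
have NH := NHlem Kp.
have Hnc : ~ (exists mu : 'I_m -> R, (forall i, 0 <= mu i) /\ Xr x = \sum_i mu i *: Xr (p i)).
  move=> [mu [mu0 Hmu]]; apply: Kx; rewrite Kp.
  move: Hmu; rewrite Xr_sum /Xr /Yr => /eq_row_mx [Hx H1].
  exists mu; split => //; split => //.
  by have := congr1 (fun M : 'rV[R]_1 => M 0 0) H1; rewrite !constE.
have [y [Hy1 Hy2]] := farkas Hnc.
move: Hy1 Hy2; rewrite [y]Yr_split; set a := lsubmx y; set bt := rsubmx y 0 0.
move=> Hy1 Hy2.
have Hv i : dotp a (p i) + bt <= 0 by rewrite -dotpYX.
have Hx : 0 < dotp a x + bt by rewrite -dotpYX.
have [a' [bt' [s [Hv' [Hx' [Hai Ht]]]]]] := tighten NH Hv Hx.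
have Kpi i : K (p i) by rewrite Kp; apply: conv_pt.
have a'0 : a' != 0.
  apply/eqP => a0; move: (Ht (Ordinal dpos)) Hx'; rewrite a0 !dotp0l !add0r => ->.
  by rewrite ltxx.
pose G := [set z | K z /\ dotp a' z + bt' = 0].
have facG : facet K G.
  exists a', bt'; split => //; split.
    by move=> z; rewrite Kp => Kz; apply: conv_le Kz Hv'.
  split => //; exists (fun l => p (s l)); split => // l; split => //.
have [j Gj] := allF facG.
exists j.
have Hg2 l : dotp (n j) (p (s l)) + b j = 0.
  by apply: Fsub; rewrite -Gj; split.
have [c [c0 [Hn Hb]]] := prop_hyp Hai a'0 (n0 j) Ht Hg2.
have [i1 Hi1] : exists i, dotp a' (p i) + bt' < 0.
  apply: contrapT => Hn'; move/eqP: a'0; apply; apply: (NH a' bt') => i.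
  apply/eqP; rewrite eq_le Hv' /= leNgt; apply/negP => Hi; apply: Hn'; by exists i.
have Ho := ori_ok j (Kpi i1).
rewrite Hn Hb dotpZl -mulrDr mulrA (nmulr_lle0 _ Hi1) in Ho.
rewrite Hn Hb dotpZl -mulrDr mulrA; apply: mulr_gt0 => //.
by rewrite lt_def mulf_neq0 ?ori_neq0.
Qed.


Definition m j := ori j *: n j.

Lemma bounded j : exists mu : 'I_N -> R, (forall i, 0 <= mu i) /\
  - m j = \sum_i mu i *: m (lift j i).
Proof.
apply: contrapT => Hn; have [y [Hy1 Hy2]] := farkas Hn.
have Hyall i : dotp y (m i) <= 0.
  case: (unliftP j i) => [i'|] ->; first exact: Hy1.
  by move: Hy2; rewrite dotpNr oppr_gt0 => /ltW.
have y0 : y != 0 by apply/eqP => y0; move: Hy2; rewrite y0 dotp0l ltxx.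
case: polyK => mm [p Kp]; case: fdK => q [_ Kq].
set c := q ord0.
set B := \sum_i `|dotp y (p i)|.
have HB z : K z -> dotp y z <= B.
  rewrite Kp => Kz; rewrite -subr_le0; apply: conv_le Kz _ => i.
  rewrite subr_le0; apply: le_trans (ler_norm _) _.
  by rewrite /B (bigD1 i) //= lerDl sumr_ge0.
have yy := dotpp_gt0 y0.
set t := (`|B| + `|dotp y c| + 1) / dotp y y.
have t0 : 0 <= t by apply: divr_ge0; [rewrite addr_ge0 ?addr_ge0 ?normr_ge0 | apply: ltW].
have Kz : K (c + t *: y).
  apply: contrapT => Kz; have [j' Hj'] := sepK Kz.
  move: Hj'; rewrite dotpDr dotpZr (addrC (dotp _ c)) -addrA mulrDr.
  have := ori_ok j' (Kq ord0); rewrite -/c => H1.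
  have : ori j' * (t * dotp (n j') y) <= 0.
    by rewrite mulrCA; apply: mulr_ge0_le0 => //; move: (Hyall j'); rewrite /m dotpZr dotpC.
  move=> H2 H3; have := lerD H2 H1; rewrite addr0 => H4.
  by move: (lt_le_trans H3 H4); rewrite ltxx.
have := HB _ Kz; rewrite dotpDr dotpZr /t divfK ?gt_eqF //.
have h1 := ler_norm B; have h2 := ler_norm (- dotp y c); rewrite normrN in h2.
move=> H; lra.
Qed.

Definition li_n := li n.

Lemma GPn (U : {set 'I_N.+1}) : (#|U| <= d)%N -> li n U.
Proof.
suff H : forall k (U : {set 'I_N.+1}), (#|U| + k)%N = d -> li n U.
  by move=> HU; apply: (H (d - #|U|)%N); rewrite subnKC.
elim => [|k IH] {}U HU.
  rewrite addn0 in HU; have [s [sinj Hs]] := enum_set HU.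
  move=> w Hw Hsum.
  have Hr := gp sinj.
  have Hu : (\row_l w (s l)) *m (\matrix_(k < d, i < d) n (s k) 0 i) = 0.
    rewrite mulmx_sum_row -[RHS]Hsum (reindex_supp n sinj Hs Hw).
    apply: eq_bigr => l _; rewrite mxE; congr (_ *: _).
    by apply/rowP => i; rewrite !mxE.
  have H0 := row_free_ker Hr Hu.
  move=> i; case: (boolP (i \in U)) => [/(Hs i).1 [l <-]|/Hw //].
  by have := congr1 (fun M : 'rV[R]_d => M 0 l) H0; rewrite !mxE.
have [i0 Hi0] : exists i0, i0 \notin U.
  apply: contrapT => H.
  have : [set: 'I_N.+1]%SET \subset U.
    by apply/fintype.subsetP => i _; apply: contrapT => Hi; apply: H; exists i; apply/negP.
  move/subset_leq_card; rewrite cardsT card_ord => HH; lia.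
have HU' : (#|i0 |: U| + k)%N = d by rewrite cardsU1 Hi0; lia.
move=> w Hw; apply: (IH _ HU') => i Hi; apply: Hw.
by apply: contra Hi => Hi; rewrite in_setU1 Hi orbT.
Qed.

Lemma GPm (U : {set 'I_N.+1}) : (#|U| <= d)%N -> li m U.
Proof.
move=> HU w Hw Hs i.
have Hw' : forall i, i \notin U -> w i * ori i = 0 by move=> i' /Hw ->; rewrite mul0r.
have Hs' : \sum_i (w i * ori i) *: n i = 0.
  by rewrite -[RHS]Hs; apply: eq_bigr => i' _; rewrite /m scalerA.
have := GPn HU Hw' Hs' i => /eqP; rewrite mulf_eq0 (negbTE (ori_neq0 i)) orbF => /eqP //.
Qed.

Definition good (J : {set 'I_N.+1}) := exists kap : 'I_N.+1 -> R,
  (forall i, i \in J -> 0 < kap i) /\ (forall i, i \notin J -> kap i = 0) /\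
  \sum_i kap i *: m i = 0.

Lemma goodJ j : exists J : {set 'I_N.+1}, j \in J /\ #|J| = d.+1 /\ good J.
Proof.
have [mu [mu0 Hmu]] := bounded j.
have [lam [lam0 [Hlam Hli]]] := caratheodory mu0 Hmu.
set T := [set i | lam i != 0]%SET in Hli.
have HT : (#|T| <= d)%N := li_card Hli.
pose J := (j |: [set lift j i | i in T])%SET.
have HJ : #|J| = #|T|.+1.
  rewrite cardsU1 card_imset; last exact: lift_inj.
  suff -> : j \notin [set lift j i | i in T]%SET by [].
  by apply/imsetP => -[i _ Hi]; move: (neq_lift j i); rewrite -Hi eqxx.
pose kap i := if unlift j i is Some i' then lam i' else 1.
have Hsum : \sum_i kap i *: m i = 0.
  rewrite (bigD1_ord j) //= /kap unlift_none scale1r.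
  under eq_bigr do rewrite liftK.
  by rewrite -Hlam addrN.
have kapJ : forall i, i \notin J -> kap i = 0.
  move=> i; rewrite /J in_setU1 negb_or => /andP[Hij Hi].
  rewrite /kap; case: (unliftP j i) => [i'|] Hi'.
    apply/eqP; apply: contraNT Hi => Hl; apply/imsetP; exists i' => //.
    by rewrite inE.
  by move: Hij; rewrite Hi' eqxx.
have Hd : #|T| = d.
  apply/eqP; rewrite eqn_leq HT /= leqNgt; apply/negP => Hlt.
  have : (#|J| <= d)%N by rewrite HJ.
  move/GPm => Hl; have := Hl kap kapJ Hsum j.
  by rewrite /kap unlift_none => /eqP; rewrite oner_eq0.
exists J; split; first by rewrite in_setU1 eqxx.
split; first by rewrite HJ Hd.
exists kap; split => //.
move=> i; rewrite /kap; case: (unliftP j i) => [i'|] Hi' //.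
rewrite Hi' in_setU1 eq_sym (negbTE (neq_lift _ _)) /= => /imsetP [i2 Hi2 /lift_inj ->].
by rewrite lt_def; move: Hi2; rewrite inE => ->; rewrite lam0.
Qed.

Lemma sum_le0_eq0 (I : finType) (f : I -> R) :
  (forall i, f i <= 0) -> \sum_i f i = 0 -> forall i, f i = 0.
Proof.
move=> H0 Hs i; apply/eqP; rewrite -oppr_eq0; apply/eqP.
apply: (@psumr_eq0P _ _ xpredT (fun i => - f i)) => //.
  by move=> k _; rewrite oppr_ge0.
by rewrite sumrN Hs oppr0.
Qed.

Definition SJ (J : {set 'I_N.+1}) : set 'rV[R]_d :=
  [set y | forall i, i \in J -> ori i * (dotp (n i) y + b i) <= 0].

Lemma AmE k (A : 'M[R]_(k, d)) (u : 'rV[R]_d) l : (A *m u^T) l 0 = dotp (row l A) u.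
Proof. by rewrite mxE; apply: eq_bigr => c _; rewrite !mxE. Qed.

Lemma simplexJ (J : {set 'I_N.+1}) : #|J| = d.+1 -> good J ->
  simplex (SJ J) /\ (forall G, facet (SJ J) G -> exists i, F i `<=` G).
Proof.
move=> HJ [kap [kpos [kout ksum]]].
have [io [ioinj Hio]] := enum_set HJ.
pose h i y := dotp (n i) y + b i.
pose L k y := ori (io k) * h (io k) y.
pose kp k := kap (io k).
have ioJ k : io k \in J by apply/(Hio _).2; exists k.
have kp0 k : 0 < kp k by apply: kpos.
have ksum' : \sum_k kp k *: m (io k) = 0.
  by rewrite -(reindex_supp m ioinj Hio kout) ksum.
pose C0 := \sum_k kp k * (ori (io k) * b (io k)).
have HC y : \sum_k kp k * L k y = C0.
  transitivity (\sum_k (dotp (kp k *: m (io k)) y + kp k * (ori (io k) * b (io k)))).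
    by apply: eq_bigr => k _; rewrite /L /h /m !dotpZl; ring.
  by rewrite big_split /= -dotp_suml ksum' dotp0l add0r.
have LK z : K z -> forall k, L k z <= 0 by move=> Kz k; apply: ori_ok.
have C0neg : C0 < 0.
  case: fdK => q [qi Kq].
  have C0le : C0 <= 0.
    rewrite -(HC (q ord0)); apply: sumr_le0 => k _.
    exact: mulr_ge0_le0 (ltW (kp0 k)) (LK _ (Kq _) k).
  rewrite lt_neqAle C0le andbT; apply/eqP => C00.
  have HL0 i : L ord0 (q i) = 0.
    have P1 : forall k, kp k * L k (q i) <= 0.
      by move=> k; apply: mulr_ge0_le0 (ltW (kp0 k)) (LK _ (Kq _) k).
    have P2 : \sum_k kp k * L k (q i) = 0 by rewrite HC.
    have := sum_le0_eq0 P1 P2 ord0.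
    by move/eqP; rewrite mulf_eq0 gt_eqF //= => /eqP.
  have Hq i : dotp (ori (io ord0) *: n (io ord0)) (q i) + ori (io ord0) * b (io ord0) = 0.
    by rewrite dotpZl -mulrDr; apply: HL0.
  have := flat qi Hq => /eqP; rewrite scaler_eq0 (negbTE (ori_neq0 _)) /=.
  by rewrite (negbTE (n0 _)).
have C0n0 : C0 != 0 by rewrite lt_eqF.
pose A (k : 'I_d.+1) := \matrix_(l < d, i < d) n (io (lift k l)) 0 i.
have Au k : A k \in unitmx.
  by rewrite -row_free_unit; apply: gp => l1 l2 /ioinj /lift_inj.
have rowA k l : row l (A k) = n (io (lift k l)).
  by apply/rowP => i; rewrite !mxE.
pose v (k : 'I_d.+1) : 'rV[R]_d := (invmx (A k) *m \col_l (- b (io (lift k l))))^T.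
have hv k l : h (io (lift k l)) (v k) = 0.
  by rewrite /h -(rowA k l) -AmE /v trmxK mulKVmx // mxE addNr.
have uniq (k : 'I_d.+1) z : (forall l, dotp (n (io (lift k l))) z = 0) -> z = 0.
  move=> H; have HA : A k *m z^T = 0.
    by apply/matrixP => l c; rewrite (ord1 c) AmE rowA H zeroE.
  apply: trmx_inj; rewrite trmx0 -(mulKmx (Au k) (z^T)) HA mulmx0 //.
have hv0 k' k : k' != k -> h (io k') (v k) = 0.
  case: (unliftP k k') => [l ->|->]; [by rewrite hv | by rewrite eqxx].
have Lvv k : L k (v k) = C0 / kp k.
  have := HC (v k); rewrite (bigD1 k) //= big1 ?addr0 => [H|k' Hk'].
    by rewrite -H [RHS]mulrC mulKf // gt_eqF.
  by rewrite /L hv0 ?mulr0.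
have hvv k : h (io k) (v k) != 0.
  apply/eqP => H0; move: (Lvv k); rewrite /L H0 mulr0 => /esym/eqP.
  by rewrite mulf_eq0 (negbTE C0n0) invr_eq0 gt_eqF.
pose w (k : 'I_d.+1) y := kp k * L k y / C0.
have wsum y : \sum_k w k y = 1 by rewrite /w -mulr_suml HC divff.
have Hcomb k' (ww : 'I_d.+1 -> R) : \sum_k ww k = 1 ->
    h (io k') (\sum_k ww k *: v k) = ww k' * h (io k') (v k').
  move=> Hw; rewrite /h conv_aff // (bigD1 k') //= big1 ?addr0 // => k Hk.
  by rewrite -/(h _ _) hv0 ?mulr0 // eq_sym.
have Hbar y : y = \sum_k w k y *: v k.
  apply/eqP; rewrite -subr_eq0; apply/eqP; apply: (uniq ord0) => l.
  set k' := lift ord0 l.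
  have : h (io k') (\sum_k w k y *: v k) = h (io k') y.
    rewrite Hcomb // /w.
    have E := Lvv k'; rewrite /L in E.
    transitivity (h (io k') y * (kp k' * (ori (io k') * h (io k') (v k'))) / C0).
      by rewrite /L; ring.
    by rewrite E [kp k' * _]mulrCA divff ?gt_eqF // mulr1 mulfK.
  by rewrite /h => /addIr; rewrite dotpBr => ->; rewrite subrr.
have wge0 y : SJ J y -> forall k, 0 <= w k y.
  move=> Hy k; rewrite /w; apply: mulr_le0 (mulr_ge0_le0 (ltW (kp0 k)) (Hy _ (ioJ k))) _.
  by rewrite ltW // invr_lt0.
have Hconv : SJ J = conv_hull v.
  apply/seteqP; split => y.
    move=> Hy; exists (w^~ y); split; first exact: wge0.
    by split; [exact: wsum | exact: Hbar].
  move=> [ww [ww0 [ww1 ->]]] i Hi; have [k <-] := (Hio i).1 Hi.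
  rewrite -/(h (io k) _) Hcomb // mulrCA -/(L k (v k)) Lvv.
  apply: mulr_ge0_le0 (ww0 k) _; apply: mulr_le0_ge0 (ltW C0neg) _.
  by rewrite invr_ge0 ltW.
split.
  exists v; split => //.
  move=> ww Hw1 Hw2 k; have := aff_comb v ww (n (io k)) (b (io k)).
  rewrite Hw1 Hw2 dotp0r mulr0 addr0 (bigD1 k) //= big1 ?addr0.
    by move/esym/eqP; rewrite mulf_eq0 (negbTE (hvv k)) orbF => /eqP.
  by move=> k' Hk'; rewrite -/(h _ _) hv0 ?mulr0 // eq_sym.
move=> G [a [bt [a0 [Ha [HG [g [gi Hg]]]]]]].
have vS k : SJ J (v k) by rewrite Hconv; apply: conv_pt.
pose e k := dotp a (v k) + bt.
have e_le k : e k <= 0 by apply: Ha.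
have Hrep y : dotp a y + bt = \sum_k w k y * e k.
  by rewrite {1}(Hbar y) conv_aff // wsum.
have gS l : SJ J (g l) /\ dotp a (g l) + bt = 0 by have := Hg l; rewrite HG.
have [k1 Hk1] : exists k, e k < 0.
  apply: contrapT => Hne.
  have e0 k : e k = 0.
    apply/eqP; rewrite eq_le e_le /= leNgt; apply/negP => H; apply: Hne; by exists k.
  have Hall y : dotp a y + bt = 0 by rewrite Hrep big1 // => k _; rewrite e0 mulr0.
  have bt0 : bt = 0 by have := Hall 0; rewrite dotp0r add0r.
  move/eqP: a0; apply; apply/eqP; rewrite -dotpp_eq0; have := Hall a; rewrite bt0 addr0 => ->.
  by [].
case: (pselect (exists k2, k2 != k1 /\ e k2 < 0)) => [[k2 [k21 Hk2]]|Hno].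
  exfalso.
  have wz l k : e k < 0 -> w k (g l) = 0.
    move=> Hek; have [gSl gal] := gS l.
    have P1 : forall k0, w k0 (g l) * e k0 <= 0.
      by move=> k0; apply: mulr_ge0_le0 (wge0 _ gSl k0) (e_le k0).
    have P2 : \sum_k0 w k0 (g l) * e k0 = 0 by rewrite -Hrep.
    have := sum_le0_eq0 P1 P2 k.
    by move/eqP; rewrite mulf_eq0 (lt_eqF Hek) orbF => /eqP.
  have hz k : e k < 0 -> forall l, dotp (n (io k)) (g l) + b (io k) = 0.
    move=> Hek l; have := wz l k Hek; rewrite /w /L => /eqP.
    rewrite !mulf_eq0 invr_eq0 (negbTE C0n0) (gt_eqF (kp0 k)) (negbTE (ori_neq0 _)) /= orbF.
    by move/eqP.
  have [al1 [al2 [Hne [Hsa Hsb]]]] := two_hyp gi (hz k1 Hk1) (hz k2 Hk2).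
  have ev k : al1 * h (io k1) (v k) + al2 * h (io k2) (v k) = 0.
    transitivity (dotp (al1 *: n (io k1) + al2 *: n (io k2)) (v k) +
                   (al1 * b (io k1) + al2 * b (io k2))).
      by rewrite /h dotpDl !dotpZl; ring.
    by rewrite Hsa Hsb dotp0l addr0.
  have := ev k1; rewrite (hv0 k2 k1 k21) mulr0 addr0 => /eqP.
  rewrite mulf_eq0 (negbTE (hvv k1)) orbF => /eqP a10.
  have := ev k2; rewrite (hv0 k1 k2) 1?eq_sym // mulr0 add0r => /eqP.
  rewrite mulf_eq0 (negbTE (hvv k2)) orbF => /eqP a20.
  by move: Hne; rewrite a10 a20 eqxx.
exists (io k1) => y Fy; rewrite HG; split.
  by move=> i Hi; apply: ori_ok; apply: FK Fy.
rewrite Hrep (bigD1 k1) //= big1 ?addr0.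
  have hy : h (io k1) y = 0 by apply: Fsub Fy.
  by rewrite /w /L hy !mulr0 !mul0r.
move=> k Hk; suff -> : e k = 0 by rewrite mulr0.
apply/eqP; rewrite eq_le e_le /= leNgt; apply/negP => H; apply: Hno; by exists k.
Qed.

Lemma main_thm : exists (M : nat) (S : 'I_M -> set 'rV[R]_d),
    (M <= 'C(N.+1, d.+1))%N /\
    (forall k, simplex (S k)) /\
    K = [set x | forall k, S k x] /\
    (forall k G, facet (S k) G -> exists j, F j `<=` G).
Proof.
pose D := [set A : {set 'I_N.+1} | #|A| == d.+1]%SET.
have HD : #|D| = 'C(N.+1, d.+1) by rewrite card_draws card_ord.
have [io [ioinj Hio]] := enum_set HD.
have [J0 [_ [HJ0 gJ0]]] := goodJ ord0.
pose S k := if pselect (good (io k)) then SJ (io k) else SJ J0.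
have cardio k : #|io k| = d.+1.
  by have := (Hio (io k)).2 (ex_intro _ k erefl); rewrite inE => /eqP.
have Sprop k : simplex (S k) /\ (forall G, facet (S k) G -> exists i, F i `<=` G).
  by rewrite /S; case: pselect => H; apply: simplexJ.
exists 'C(N.+1, d.+1), S; split => //; split; first by move=> k; case: (Sprop k).
split; last by move=> k; case: (Sprop k).
apply/seteqP; split => x.
  by move=> Kx k; rewrite /S; case: pselect => _ i _; apply: ori_ok.
move=> /= Hx; apply: contrapT => Kx.
have [j Hj] := sepK Kx.
have [J [jJ [HJ gJ]]] := goodJ j.
have JD : J \in D by rewrite inE HJ.
have [k Hk] := (Hio J).1 JD.
have Sk : S k = SJ J.
  rewrite /S; case: pselect => H /=; first by rewrite Hk.
  by exfalso; apply: H; rewrite Hk.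
have := Hx k; rewrite Sk => H; have := H j jJ.
by rewrite leNgt Hj.
Qed.

End Main.


Theorem theorem3p8 (R : realType) (d N : nat) (K : set 'rV[R]_d)
  (F : 'I_N.+1 -> set 'rV[R]_d) (n : 'I_N.+1 -> 'rV[R]_d) (b : 'I_N.+1 -> R) :
  (d <= N)%N ->
  polytope K -> full_dim K ->
  injective F -> (forall j, facet K (F j)) ->
  (forall G, facet K G -> exists j, G = F j) ->
  (forall j, n j != 0) ->
  (forall j, F j `<=` [set x | dotp (n j) x + b j = 0]) ->
  (forall s : 'I_d -> 'I_N.+1, injective s ->
     row_free (\matrix_(k < d, i < d) n (s k) 0 i)) ->
  exists (M : nat) (S : 'I_M -> set 'rV[R]_d),
    (M <= 'C(N.+1, d.+1))%N /\
    (forall k, simplex (S k)) /\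
    K = [set x | forall k, S k x] /\
    (forall k G, facet (S k) G -> exists j, F j `<=` G).
Proof.
move=> dN polyK fdK _ facF allF n0 Fsub gp.
exact: (@main_thm R d N K F n b dN polyK fdK facF allF n0 Fsub gp).
Qed.
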